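(* In the category of transition systems labelled on an alphabet $\Sigma$, a monomorphism $m:S\to X$ is strong if and only if it defines an induced subgraph of $X$, i.e., every arc of $X$ (with any label) whose source and target both lie in the image of $m$ lies in the image of $m$. Equivalently, the strong subobjects of a transition system are those obtained by removing a subset of its states (together with all arcs incident to them).
   Context: A graph has a set of nodes (states), a set of arcs (transitions) and source/target maps; a transition system labelled on $\Sigma$ is a graph whose arcs are labelled by elements of $\Sigma$ such that for every pair of nodes $x,y$ and every $\alpha\in\Sigma$ there is at most one arc from $x$ to $y$ labelled $\alpha$. Morphisms of transition systems are maps of nodes and arcs preserving source, target and label. A monomorphism $m:X\to Y$ is strong if for every commutative square $m\circ f = g\circ e$ with $e:X'\to Y'$ an epimorphism, $f:X'\to X$, $g:Y'\to Y$, there exists a (necessarily unique) $d:Y'\to X$ with $d\circ e=f$ and $m\circ d=g$. *)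

(* Defs.v *)
Set Implicit Arguments.

Record TS (Sigma : Type) := {
  node : Type;
  arc : Type;
  src : arc -> node;
  tgt : arc -> node;
  lab : arc -> Sigma;
  ts_simple : forall a b : arc,
      src a = src b -> tgt a = tgt b -> lab a = lab b -> a = b
}.

Arguments node {Sigma} _.
Arguments arc {Sigma} _.
Arguments src {Sigma} _ _.
Arguments tgt {Sigma} _ _.
Arguments lab {Sigma} _ _.

Record Hom (Sigma : Type) (X Y : TS Sigma) := {
  vmap : node X -> node Y;
  amap : arc X -> arc Y;
  hom_src : forall a, src Y (amap a) = vmap (src X a);
  hom_tgt : forall a, tgt Y (amap a) = vmap (tgt X a);
  hom_lab : forall a, lab Y (amap a) = lab X a
}.

Arguments vmap {Sigma X Y} _ _.
Arguments amap {Sigma X Y} _ _.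

Definition hom_eq (Sigma : Type) (X Y : TS Sigma) (f g : Hom X Y) : Prop :=
  (forall x, vmap f x = vmap g x) /\ (forall a, amap f a = amap g a).

Definition comp (Sigma : Type) (X Y Z : TS Sigma) (g : Hom Y Z) (f : Hom X Y)
  : Hom X Z.
Proof.
  refine {| vmap := fun x => vmap g (vmap f x);
            amap := fun a => amap g (amap f a) |}.
  - intro a. rewrite (hom_src g), (hom_src f). reflexivity.
  - intro a. rewrite (hom_tgt g), (hom_tgt f). reflexivity.
  - intro a. rewrite (hom_lab g), (hom_lab f). reflexivity.
Defined.

Definition is_mono (Sigma : Type) (X Y : TS Sigma) (m : Hom X Y) : Prop :=
  forall (W : TS Sigma) (f g : Hom W X), hom_eq (comp m f) (comp m g) -> hom_eq f g.

Definition is_epi (Sigma : Type) (X Y : TS Sigma) (e : Hom X Y) : Prop :=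
  forall (Z : TS Sigma) (f g : Hom Y Z), hom_eq (comp f e) (comp g e) -> hom_eq f g.

Definition is_strong_mono (Sigma : Type) (X Y : TS Sigma) (m : Hom X Y) : Prop :=
  is_mono m /\
  forall (X' Y' : TS Sigma) (e : Hom X' Y') (f : Hom X' X) (g : Hom Y' Y),
    is_epi e -> hom_eq (comp m f) (comp g e) ->
    exists d : Hom Y' X, hom_eq (comp d e) f /\ hom_eq (comp m d) g.

Definition induced (Sigma : Type) (X Y : TS Sigma) (m : Hom X Y) : Prop :=
  forall a : arc Y,
    (exists s, vmap m s = src Y a) ->
    (exists t, vmap m t = tgt Y a) ->
    exists b, amap m b = a.

(* Main.v *)
Require Import Defs.
From Stdlib Require Import Classical ClassicalEpsilon PropExtensionality.
Set Implicit Arguments.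

Section Aux.
Variable Sigma : Type.

Definition ptTS : TS Sigma.
Proof.
  refine {| node := unit; arc := Empty_set; src := fun a : Empty_set => match a with end;
            tgt := fun a : Empty_set => match a with end; lab := fun a : Empty_set => match a with end |}.
  intros a; destruct a.
Defined.

Definition ptHom (S : TS Sigma) (s : node S) : Hom ptTS S.
Proof.
  refine {| vmap := fun _ => s; amap := fun a : arc ptTS => Empty_set_rect (fun _ => arc S) a |};
  intros a; destruct a.
Defined.

Lemma mono_inj (S X : TS Sigma) (m : Hom S X) :
  is_mono m -> forall x y, vmap m x = vmap m y -> x = y.
Proof.
  intros Hm x y E.
  destruct (Hm ptTS (ptHom S x) (ptHom S y)) as [H1 _].
  - split; [intros []; exact E | intros []].
  - exact (H1 tt).
Qed.

Lemma arc_inj (S X : TS Sigma) (m : Hom S X) :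
  (forall x y, vmap m x = vmap m y -> x = y) ->
  forall b b', amap m b = amap m b' -> b = b'.
Proof.
  intros Hi b b' E. apply (ts_simple S).
  - apply Hi. rewrite <- !(hom_src m), E. reflexivity.
  - apply Hi. rewrite <- !(hom_tgt m), E. reflexivity.
  - rewrite <- !(hom_lab m), E. reflexivity.
Qed.

Definition fullTS : TS Sigma.
Proof.
  refine {| node := Prop; arc := (Prop * Prop * Sigma)%type;
            src := fun c => fst (fst c); tgt := fun c => snd (fst c);
            lab := fun c => snd c |}.
  intros [[a1 a2] a3] [[b1 b2] b3]; simpl; intros; subst; reflexivity.
Defined.

Definition predHom (Y : TS Sigma) (P : node Y -> Prop) : Hom Y fullTS.
Proof.
  refine {| vmap := (P : node Y -> node fullTS); amap := (fun a => (P (src Y a), P (tgt Y a), lab Y a)) : arc Y -> arc fullTS |};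
  reflexivity.
Defined.

Lemma epi_surj (X Y : TS Sigma) (e : Hom X Y) :
  is_epi e -> forall y, exists x, vmap e x = y.
Proof.
  intros He y.
  destruct (He fullTS (predHom Y (fun _ => True))
                      (predHom Y (fun y => exists x, vmap e x = y))) as [H1 _].
  - assert (Hv : forall x, True = (exists x', vmap e x' = vmap e x)).
    { intros x. apply propositional_extensionality. split; eauto. }
    split; simpl.
    + exact Hv.
    + intros a. rewrite (hom_src e), (hom_tgt e), (hom_lab e).
      rewrite <- !Hv. reflexivity.
  - simpl in H1. rewrite <- (H1 y). exact I.
Qed.

End Aux.

Section Fwd.
Variables (Sigma : Type) (S X : TS Sigma) (m : Hom S X).
Hypothesis Hi : forall x y, vmap m x = vmap m y -> x = y.
Hypothesis Hind : induced m.
Variables (X' Y' : TS Sigma) (e : Hom X' Y') (f : Hom X' S) (g : Hom Y' X).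
Hypothesis He : is_epi e.
Hypothesis Hc : hom_eq (comp m f) (comp g e).

Lemma exv : forall y, exists s, vmap m s = vmap g y.
Proof.
  intros y. destruct (epi_surj He y) as [x <-]. exists (vmap f x).
  exact (proj1 Hc x).
Qed.

Definition dv (y : node Y') : node S :=
  proj1_sig (constructive_indefinite_description _ (exv y)).
Lemma dv_spec y : vmap m (dv y) = vmap g y.
Proof. unfold dv. destruct constructive_indefinite_description; assumption. Qed.

Lemma exa : forall a, exists b, amap m b = amap g a.
Proof.
  intros a. apply Hind.
  - exists (dv (src Y' a)). rewrite dv_spec, (hom_src g). reflexivity.
  - exists (dv (tgt Y' a)). rewrite dv_spec, (hom_tgt g). reflexivity.
Qed.

Definition da (a : arc Y') : arc S :=
  proj1_sig (constructive_indefinite_description _ (exa a)).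
Lemma da_spec a : amap m (da a) = amap g a.
Proof. unfold da. destruct constructive_indefinite_description; assumption. Qed.

Definition dHom : Hom Y' S.
Proof.
  refine {| vmap := dv; amap := da |}; intros a.
  - apply Hi. rewrite dv_spec, <- (hom_src m), da_spec, (hom_src g). reflexivity.
  - apply Hi. rewrite dv_spec, <- (hom_tgt m), da_spec, (hom_tgt g). reflexivity.
  - rewrite <- (hom_lab m), da_spec, (hom_lab g). reflexivity.
Defined.

Lemma fwd : exists d : Hom Y' S, hom_eq (comp d e) f /\ hom_eq (comp m d) g.
Proof.
  exists dHom. split; split; simpl.
  - intros x. apply Hi. rewrite dv_spec. symmetry. exact (proj1 Hc x).
  - intros a. apply (arc_inj _ Hi). rewrite da_spec. symmetry. exact (proj2 Hc a).
  - exact dv_spec.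
  - exact da_spec.
Qed.
End Fwd.

Section Bwd.
Variables (Sigma : Type) (S X : TS Sigma) (m : Hom S X).
Variables (a : arc X) (s t : node S).
Hypothesis Hs : vmap m s = src X a.
Hypothesis Ht : vmap m t = tgt X a.
Hypothesis Hn : forall b, amap m b <> a.

Definition osrc (c : option (arc S)) := match c with Some b => src S b | None => s end.
Definition otgt (c : option (arc S)) := match c with Some b => tgt S b | None => t end.
Definition olab (c : option (arc S)) := match c with Some b => lab S b | None => lab X a end.

Lemma none_some b : src S b = s -> tgt S b = t -> lab S b = lab X a -> False.
Proof.
  intros E1 E2 E3. apply (Hn b). apply (ts_simple X).
  - rewrite (hom_src m), E1. exact Hs.
  - rewrite (hom_tgt m), E2. exact Ht.
  - rewrite (hom_lab m). exact E3.
Qed.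

Definition YT : TS Sigma.
Proof.
  refine {| node := node S; arc := option (arc S); src := osrc; tgt := otgt; lab := olab |}.
  intros [b|] [b'|]; simpl; intros E1 E2 E3.
  - f_equal. apply (ts_simple S); assumption.
  - exfalso. apply (none_some b); assumption.
  - exfalso. apply (none_some b'); symmetry; assumption.
  - reflexivity.
Defined.

Definition eH : Hom S YT.
Proof. refine {| vmap := (fun x => x) : node S -> node YT; amap := (@Some _) : arc S -> arc YT |}; reflexivity. Defined.

Definition idH : Hom S S.
Proof. refine {| vmap := fun x => x; amap := fun b => b |}; reflexivity. Defined.

Definition gH : Hom YT X.
Proof.
  refine {| vmap := (vmap m : node YT -> node X); amap := fun c : arc YT => match c with Some b => amap m b | None => a end |};
  intros [b|]; simpl; first [apply (hom_src m)|apply (hom_tgt m)|apply (hom_lab m)|auto].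
Defined.

Lemma eH_epi : is_epi eH.
Proof.
  intros Z f g [H1 H2]; simpl in *. split; [exact H1|].
  intros [b|]; [exact (H2 b)|].
  apply (ts_simple Z).
  - rewrite !(hom_src _). simpl. apply H1.
  - rewrite !(hom_tgt _). simpl. apply H1.
  - rewrite !(hom_lab _). reflexivity.
Qed.

Lemma bwd : is_strong_mono m -> False.
Proof.
  intros [_ Hs'].
  destruct (Hs' S YT eH idH gH eH_epi) as [d [_ [_ H2]]].
  - split; reflexivity.
  - exact (Hn _ (H2 None)).
Qed.
End Bwd.

Theorem theorem7 (Sigma : Type) (S X : TS Sigma) (m : Hom S X) :
  is_mono m -> (is_strong_mono m <-> induced m).
Proof.
  intros Hm. split.
  - intros Hst a [s Hs] [t Ht].
    apply NNPP. intros Hn.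
    refine (@bwd Sigma S X m a s t Hs Ht _ Hst).
    intros b E. apply Hn. eauto.
  - intros Hind. split; [exact Hm|].
    intros X' Y' e f g He Hc.
    exact (fwd (mono_inj Hm) Hind He Hc).
Qed.
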